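(* Let $G$ be a simple connected graph with at least one edge. Then $H(G)=\bigcap_{\mathcal{F}\in\mathscr{F}}G(A_\mathcal{F})$, where all graphs $G(A_\mathcal{F})$ are regarded as graphs on the common vertex set $E(G)$ (the vertex corresponding to the column of edge $e$ being identified with $e$), and the intersection is taken over all path fixings $\mathcal{F}$ of $G$.
   Context: For distinct $u,v\in V(G)$, $\mathcal{P}_{uv}$ is the set of shortest $(u,v)$-paths in $G$ and $\mathcal{P}$ is the set of all such shortest paths. A path fixing of $G$ is a set $\mathcal{F}\subseteq\mathcal{P}$ with $|\mathcal{F}\cap\mathcal{P}_{uv}|=1$ for all distinct $u,v\in V(G)$; $\mathscr{F}$ is the set of all path fixings. For $\mathcal{F}\in\mathscr{F}$, $A_\mathcal{F}$ is the 0-1 matrix with rows indexed by the paths in $\mathcal{F}$ and columns indexed by $E(G)$, whose $(P,e)$ entry is 1 iff $e\in E(P)$. For a 0-1 matrix $A$ with columns $a_1,\dots,a_n$, $G(A)$ is the graph with one vertex per column, where distinct vertices $i,j$ are adjacent iff $a_i^{T}a_j\geq 1$. An edge $e$ separates distinct $u_1,u_2$ if $e$ lies on every path in $\mathcal{P}_{u_1u_2}$. The auxiliary graph $H(G)$ has vertex set $E(G)$, and distinct $e_1,e_2$ are adjacent in $H(G)$ iff some pair of distinct vertices is separated by both. The intersection of graphs has the intersection of the vertex sets and of the edge sets. *)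

(* Defs.v *)
From mathcomp Require Import all_boot all_order all_algebra.
Set Implicit Arguments. Unset Strict Implicit. Unset Printing Implicit Defensive.
Import GRing.Theory Num.Theory.

Section Defs.
Variables (T : finType) (g : rel T).

Definition is_edge (S : {set T}) : bool :=
  [exists u, exists v, g u v && (S == [set u; v])].

Definition edge := {S : {set T} | is_edge S}.

Definition walk_edges (u : T) (s : seq T) : {set edge} :=
  [set S : edge | has (fun p => val S == [set p.1; p.2]) (zip (u :: s) s)].

(* s is the tail of a shortest (u,v)-walk u :: s (hence a shortest path). *)
Definition shortest_walk (u v : T) (s : seq T) : Prop :=
  [/\ path g u s, last u s = v &
      forall s', path g u s' -> last u s' = v -> size s <= size s'].

(* A path with at least one edge is identified with its edge set E(P);
   membership of a path in P_uv. Note P_uv = P_vu. *)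
Definition in_Puv (u v : T) (P : {set edge}) : Prop :=
  exists s, shortest_walk u v s /\ P = walk_edges u s.

Definition in_P (P : {set edge}) : Prop :=
  exists u v, u <> v /\ in_Puv u v P.

Definition path_fixing (F : {set {set edge}}) : Prop :=
  (forall P, P \in F -> in_P P) /\
  (forall u v, u <> v -> exists! P, P \in F /\ in_Puv u v P).

Definition AF (F : {set {set edge}}) : 'M[int]_(#|F|, #|{: edge}|) :=
  \matrix_(i < #|F|, j < #|{: edge}|)
     (((enum_val j \in (enum_val i : {set edge})) : nat)%:R)%R.

Definition separates (e : edge) (u1 u2 : T) : Prop :=
  forall P, in_Puv u1 u2 P -> e \in P.

Definition H_adj (e1 e2 : edge) : Prop :=
  e1 <> e2 /\ exists u1 u2, u1 <> u2 /\ separates e1 u1 u2 /\ separates e2 u1 u2.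

End Defs.

Definition colgraph_adj (m n : nat) (A : 'M[int]_(m, n)) (i j : 'I_n) : bool :=
  (i != j) && (1 <= ((col i A)^T *m col j A) 0 0)%R.

(* Main.v *)
Require Import Defs.
From mathcomp Require Import all_boot all_order all_algebra.
From Stdlib Require Import ClassicalEpsilon Classical.
From mathcomp Require Import zify.
Set Implicit Arguments. Unset Strict Implicit. Unset Printing Implicit Defensive.

Section W.
Variables (T : finType) (g : rel T).

Lemma size_zipS (u : T) s : size (zip (u::s) s) = size s.
Proof. by rewrite size_zip /=; apply/minn_idPr. Qed.

Lemma mem_we u s (S : edge g) : S \in walk_edges g u s <->
  exists2 i, i < size s & val S = [set nth u (u::s) i; nth u s i].
Proof.
rewrite inE; split.
  case/hasP=> -[a b] /(nthP (u,u)) [i hi E] /= /eqP ->.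
  move: hi E; rewrite nth_zip_cond => hi; rewrite hi => -[<- <-].
  by exists i => //; rewrite -(size_zipS u).
move=> [i hi E]; apply/hasP; exists (nth u (u::s) i, nth u s i) => /=; last by rewrite E.
apply/(nthP (u,u)); exists i; first by rewrite size_zipS.
by rewrite nth_zip_cond size_zipS hi.
Qed.

Lemma rev_lastE (u : T) s : last u s :: rev (belast u s) = rcons (rev s) u.
Proof. by rewrite -rev_rcons -lastI rev_cons. Qed.

Lemma rev_last (u : T) s : last (last u s) (rev (belast u s)) = u.
Proof. by change (last u (last u s :: rev (belast u s)) = u); rewrite rev_lastE last_rcons. Qed.

Lemma rev_size (u : T) s : size (rev (belast u s)) = size s.
Proof. by rewrite size_rev size_belast. Qed.

Hypothesis gsym : symmetric g.

Lemma rev_pathg (u : T) s : path g u s -> path g (last u s) (rev (belast u s)).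
Proof.
rewrite rev_path; apply: sub_path => x y; by rewrite /= gsym.
Qed.

Lemma sw_rev u v s : shortest_walk g u v s -> shortest_walk g v u (rev (belast u s)).
Proof.
case=> Hp Hl Hm; rewrite -Hl; split.
- exact: rev_pathg.
- exact: rev_last.
- move=> t Ht Htl; rewrite rev_size.
  have := Hm (rev (belast (last u s) t)).
  rewrite rev_size; apply; first by rewrite -{1}Htl; apply: rev_pathg.
  by rewrite -{1}Htl rev_last.
Qed.

Lemma sw_uniq u v s : shortest_walk g u v s -> uniq (u :: s).
Proof.
case=> Hp Hl Hm; apply/negPn/negP => NU.
case: (shortenP Hp) Hl => p' Hp' Up' Sub Hl.
have := Hm _ Hp' Hl.
have : size (u :: p') <= size (undup (u :: s)).
  apply: uniq_leq_size => // x; rewrite mem_undup !inE.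
  by case/orP=> [->//|/Sub ->]; rewrite orbT.
rewrite -ltn_size_undup in NU.
move=> H1 H2; have H3 := leq_ltn_trans H1 NU; rewrite /= ltnS in H3.
by have := leq_ltn_trans H2 H3; rewrite ltnn.
Qed.


Lemma nth_revq x (u : T) s i : i <= size s ->
  nth x (last u s :: rev (belast u s)) i = nth u (u::s) (size s - i).
Proof.
move=> hi; rewrite rev_lastE -rev_cons nth_rev /= ?ltnS // subSS.
by apply: set_nth_default; rewrite /= ltnS leq_subr.
Qed.

Lemma nth_revq' x (u : T) s i : i < size s ->
  nth x (rev (belast u s)) i = nth u (u::s) (size s - i.+1).
Proof. exact: (@nth_revq x u s i.+1). Qed.

Lemma we_rev_sub u s : walk_edges g u s \subset walk_edges g (last u s) (rev (belast u s)).
Proof.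
apply/subsetP => S /mem_we [j hj E]; apply/mem_we; exists (size s - j.+1).
  rewrite rev_size; lia.
rewrite E nth_revq ?nth_revq' ?rev_size; try lia.
have -> : size s - (size s - j.+1) = j.+1 by lia.
have -> : size s - (size s - j.+1).+1 = j by lia.
by rewrite /= setUC.
Qed.

Lemma we_rev u s : walk_edges g (last u s) (rev (belast u s)) = walk_edges g u s.
Proof.
apply/eqP; rewrite eqEsubset we_rev_sub andbT.
set v := last u s; set r := rev (belast u s).
have E : v :: r = rcons (rev s) u by rewrite rev_lastE.
have Hl : last v r = u by rewrite /v /r rev_last.
have Hb : belast v r = rev s.
  by have := lastI v r; rewrite E Hl => /rcons_inj [->].
have := we_rev_sub v r; by rewrite Hl Hb revK.
Qed.

Lemma in_Puv_sym u v (P : {set edge g}) : in_Puv u v P -> in_Puv v u P.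
Proof.
case=> s [Hs ->]; exists (rev (belast u s)); split; first exact: sw_rev.
by case: Hs => _ <- _; rewrite we_rev.
Qed.


Definition isend (P : {set edge g}) x :=
  (exists2 S, S \in P & x \in val S) /\
  (forall S S', S \in P -> S' \in P -> x \in val S -> x \in val S' -> S = S').

Section End.
Variables (u v : T) (s : seq T).
Hypotheses (Hs : shortest_walk g u v s) (Huv : u <> v).
Let q i := nth u (u :: s) i.
Let k := size s.

Lemma k_gt0 : 0 < k.
Proof. case: Hs => _ Hl _; rewrite /k; case: s Hl => //= Hl; by case: Huv. Qed.

Lemma qk : q k = v.
Proof. case: Hs => _ Hl _; by rewrite /q /k -Hl (nth_last u (u :: s)). Qed.

Lemma qinj i j : i <= k -> j <= k -> q i = q j -> i = j.
Proof.
move=> hi hj E; apply/eqP; rewrite -(nth_uniq u _ _ (sw_uniq Hs)) ?ltnS //.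
by apply/eqP.
Qed.

Lemma qedge i : i < k -> exists S : edge g, S \in walk_edges g u s /\ val S = [set q i; q i.+1].
Proof.
move=> hi.
have He : is_edge g [set q i; q i.+1].
  apply/existsP; exists (q i); apply/existsP; exists (q i.+1).
  rewrite eqxx andbT; case: Hs => /(pathP u) Hp _ _; exact: Hp.
exists (exist (fun S => is_edge g S) _ He); split => //; apply/mem_we; by exists i.
Qed.

Lemma qidx S j : S \in walk_edges g u s -> j <= k -> q j \in val S ->
  exists2 i, i < k & (i = j \/ i.+1 = j) /\ val S = [set q i; q i.+1].
Proof.
move=> /mem_we [i hi E] hj; rewrite E in_set2 => /orP [] /eqP Ej; exists i => //;
  split => //.
- by left; apply: qinj => //; apply: ltnW.
- by right; apply: qinj.
Qed.

Lemma end_iff x : isend (walk_edges g u s) x <-> x = u \/ x = v.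
Proof.
have k0 := k_gt0.
split.
- case=> -[S HS] /[dup] xS Hx Huniq.
  case/mem_we: HS (HS) => i hi E HS; rewrite E in_set2 in Hx.
  have [j [hj Ej]] : exists j, j <= k /\ x = q j.
    by case/orP: Hx => /eqP ->; [exists i; split => //; apply: ltnW | exists i.+1].
  case: (posnP j) => [j0|jpos]; first by left; rewrite Ej j0.
  case: (ltngtP j k) => [jk|jk|jk]; last first.
  - by right; rewrite Ej jk qk.
  - by move: hj; rewrite leqNgt jk.
  have [S1 [H1 E1]] := qedge (i := j.-1) (leq_ltn_trans (leq_pred _) jk).
  have [S2 [H2 E2]] := qedge jk.
  have := Huniq S1 S2 H1 H2.
  rewrite E1 E2 Ej prednK // !in_set2 !eqxx orbT => /(_ isT isT) /(congr1 val).
  rewrite E1 E2 => /setP /(_ (q j.-1)); rewrite !in_set2 eqxx /=.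
  have hj1 : j.-1 <= k by lia.
  case/esym/orP => /eqP /qinj Eq.
    by have := Eq hj1 hj; lia.
  by have := Eq hj1 jk; lia.
  case=> ->.
  + split.
      have [S [HS ES]] := qedge k0; exists S => //; by rewrite ES in_set2 eqxx.
    move=> S S' HS HS' xS xS'.
    have [i hi [Ei ES]] := qidx (j := 0) HS (leq0n _) xS.
    have [i' hi' [Ei' ES']] := qidx (j := 0) HS' (leq0n _) xS'.
    have i0 : i = 0 by case: Ei.
    have i0' : i' = 0 by case: Ei'.
    by apply: val_inj; rewrite ES ES' i0 i0'.
  + rewrite -qk; split.
      have hk : k.-1 < k by rewrite prednK.
      have [S [HS ES]] := qedge hk.
      exists S => //; by rewrite ES prednK // in_set2 eqxx orbT.
    move=> S S' HS HS' xS xS'.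
    have [i hi [Ei ES]] := qidx HS (leqnn _) xS.
    have [i' hi' [Ei' ES']] := qidx HS' (leqnn _) xS'.
    have i0 : i.+1 = k by case: Ei hi => // ->; rewrite ltnn.
    have i0' : i'.+1 = k by case: Ei' hi' => // ->; rewrite ltnn.
    by apply: val_inj; rewrite ES ES'; move: i0'; rewrite -i0 => -[->].
Qed.
End End.


Lemma ends_eq u v a b (P : {set edge g}) : u <> v -> a <> b -> in_Puv u v P -> in_Puv a b P ->
  (a = u /\ b = v) \/ (a = v /\ b = u).
Proof.
move=> Huv Hab [s [Hs ->]] [t [Ht Et]].
have Ea : isend (walk_edges g u s) a by rewrite Et; apply/(end_iff Ht Hab); left.
have Eb : isend (walk_edges g u s) b by rewrite Et; apply/(end_iff Ht Hab); right.
move/(end_iff Hs Huv): Ea; move/(end_iff Hs Huv): Eb.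
case=> Eb' ; case=> Ea'; subst; tauto.
Qed.

Lemma sw_exists u v : connect g u v -> exists s, shortest_walk g u v s.
Proof.
move=> /connectP [p Hp Hl].
pose pb (A : Prop) : bool := if excluded_middle_informative A then true else false.
have pbP A : reflect A (pb A) by rewrite /pb; case: excluded_middle_informative => H; constructor.
pose Pr n := pb (exists s, [/\ path g u s, last u s = v & size s = n]).
have ex : exists n, Pr n by exists (size p); apply/pbP; exists p.
case: (ex_minnP ex) => m /pbP [s [H1 H2 H3]] Hmin.
exists s; split => // s' H1' H2'; rewrite H3; apply: Hmin; apply/pbP; by exists s'.
Qed.

Section Construct.
Variable Good : pred {set edge g}.
Hypothesis Hex : forall u v, u <> v -> exists P, in_Puv u v P /\ Good P.

Definition pb (A : Prop) : bool := if excluded_middle_informative A then true else false.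
Lemma pbP A : reflect A (pb A).
Proof. by rewrite /pb; case: excluded_middle_informative => H; constructor. Qed.

Definition Qp u v (P : {set edge g}) := pb ((in_Puv u v P \/ in_Puv v u P) /\ Good P).
Definition Cp u v := [pick P | Qp u v P].
Definition Fc : {set {set edge g}} := [set P | pb (exists u v, u <> v /\ Cp u v = Some P)].

Lemma Cp_sym u v : Cp u v = Cp v u.
Proof. apply: eq_pick => P; apply/pbP/pbP; tauto. Qed.

Lemma Cp_some u v : u <> v -> exists P, Cp u v = Some P /\ in_Puv u v P /\ Good P.
Proof.
move=> Huv; rewrite /Cp; case: pickP => [P /pbP [H1 H2] | H].
  exists P; split => //; split => //; case: H1 => // /in_Puv_sym //.
have [P [H1 H2]] := Hex Huv; have := H P; rewrite /Qp.
by case: pbP => //; case; split => //; left.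
Qed.

Lemma Fc_mem P : P \in Fc -> exists u v, [/\ u <> v, Cp u v = Some P, in_Puv u v P & Good P].
Proof.
rewrite inE => /pbP [u [v [Huv E]]]; exists u, v.
have [P' [E' [H1 H2]]] := Cp_some Huv; move: E; rewrite E' => -[<-]; by [].
Qed.

Lemma Fc_fixing : path_fixing Fc /\ forall P, P \in Fc -> Good P.
Proof.
split; last by move=> P /Fc_mem [u [v [_ _ _ ->]]].
split.
  by move=> P /Fc_mem [u [v [Huv _ H _]]]; exists u, v.
move=> u v Huv; have [P [E [H1 H2]]] := Cp_some Huv.
exists P; split.
  split => //; rewrite inE; apply/pbP; by exists u, v.
move=> P' [/Fc_mem [a [b [Hab E' H' _]]] H''].
case: (ends_eq Huv Hab H'' H') => -[Ea Eb]; subst a b.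
  by move: E'; rewrite E => -[].
by move: E'; rewrite Cp_sym E => -[].
Qed.
End Construct.

End W.

Import GRing.Theory Num.Theory.
Local Open Scope ring_scope.

Lemma dotE (T : finType) (g : rel T) (F : {set {set edge g}}) (e1 e2 : edge g) :
  ((col (enum_rank e1) (AF F))^T *m col (enum_rank e2) (AF F)) 0 0 =
  \sum_(r < #|F|) (((e1 \in (enum_val r : {set edge g})) && (e2 \in (enum_val r : {set edge g})) : nat)%:R : int).
Proof.
rewrite !mxE; apply: eq_bigr => r _; rewrite !mxE !enum_rankK.
by case: (e1 \in _); case: (e2 \in _); rewrite ?mul1r ?mul0r.
Qed.

Theorem proposition5 (T : finType) (g : rel T)
  (gsym : symmetric g) (girr : irreflexive g)
  (gconn : forall u v : T, connect g u v)
  (gedge : exists u v : T, g u v) :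
  forall e1 e2 : edge g,
    H_adj e1 e2 <->
    (forall F : {set {set edge g}}, path_fixing F ->
       colgraph_adj (AF F) (enum_rank e1) (enum_rank e2)).
Proof.
move=> e1 e2; split.
  case=> ne [u1 [u2 [neq [s1 s2]]]] F [_ HF].
  have [P [[PF Pin] _]] := HF u1 u2 neq.
  apply/andP; split.
    by apply/eqP => /(can_inj enum_rankK).
  rewrite dotE (bigD1 (enum_rank_in PF P)) //= enum_rankK_in // (s1 P Pin) (s2 P Pin) /=.
  by rewrite lerDl sumr_ge0.
move=> H; apply: NNPP => nH.
pose Good (P : {set edge g}) := (e1 == e2) || ~~ ((e1 \in P) && (e2 \in P)).
have Hex : forall u v, u <> v -> exists P, in_Puv u v P /\ Good P.
  move=> u v Huv; case: (eqVneq e1 e2) => [E|NE].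
    have [s Hs] := sw_exists (gconn u v).
    by exists (walk_edges g u s); split => //; [exists s | rewrite /Good E eqxx].
  have : ~ (separates e1 u v /\ separates e2 u v).
    by move=> [S1 S2]; apply: nH; split; [apply/eqP | exists u, v].
  move=> /not_and_or HH.
  have HH' : exists e, e \in [:: e1; e2] /\ ~ separates e u v.
    by case: HH => HH; [exists e1 | exists e2]; rewrite !inE eqxx ?orbT.
  case: HH' => e [He NS].
  have [P HPN] : exists P, ~ (in_Puv u v P -> e \in P) by apply: not_all_ex_not; exact: NS.
  case: (imply_to_and _ _ HPN) => HP NP.
  exists P; split => //; rewrite /Good; apply/orP; right; apply/negP => /andP [h1 h2].
  by move: He; rewrite !inE => /orP [] /eqP E; apply: NP; rewrite E.
have [HF HG] := Fc_fixing gsym Hex.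
case/andP: (H _ HF) => Hne; rewrite dotE big1 ?lerr //.
move=> r _; have NE : e1 != e2 by apply: contraNneq Hne => ->.
case/orP: (HG (enum_val r) (enum_valP r)) => [E|/negbTE -> //].
by rewrite E in NE.
Qed.
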